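(* For every fixed integer $k \ge 1$, \[ \sum_{n \ge 0} w(n,k) q^n = \frac{q^{k+4}}{(1-q)^2(1-q^2)^{k+1}}, \] where $w(n,k)$ is the number of compositions of $n$ with all parts in $\{1,2\}$ having exactly $k$ water cells.
   Context: A composition of $n \ge 0$ is a finite sequence $(c_1,\dots,c_t)$ of positive integers with $c_1+\cdots+c_t=n$; the empty composition is the unique composition of $0$. Let $C_{12}(n)$ be the set of compositions of $n$ all of whose parts lie in $\{1,2\}$. The number of water cells of a composition $(c_1,\dots,c_t)$ is $\sum_{i=1}^{t} \max\bigl(0, \min(\max_{j \le i} c_j, \max_{j \ge i} c_j) - c_i\bigr)$ (the number of unit squares that would hold water poured over its bargraph, in which column $i$ has height $c_i$). For $n,k \ge 0$, $W(n,k)$ is the set of compositions in $C_{12}(n)$ with exactly $k$ water cells and $w(n,k)=|W(n,k)|$. *)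

(* Defs.v *)
From mathcomp Require Import all_boot all_order all_algebra.
Set Implicit Arguments. Unset Strict Implicit. Unset Printing Implicit Defensive.
Import GRing.Theory.

(* Number of water cells of a composition c:
   sum_i max(0, min(max_{j<=i} c_j, max_{j>=i} c_j) - c_i);
   nat truncated subtraction implements max(0, .). *)
Definition water (c : seq nat) : nat :=
  \sum_(i < size c)
    (minn (\max_(j < i.+1) nth 0 c j) (\max_(i <= j < size c) nth 0 c j)
     - nth 0 c i).

(* A composition of length t is represented by a t-tuple over 'I_3 whose
   entries all lie in {1,2}; t ranges over 0..n (a composition of n has at
   most n parts). *)
Definition W_set (n k t : nat) : {set t.-tuple 'I_3} :=
  [set s : t.-tuple 'I_3 |
     [&& all (fun x : 'I_3 => (val x == 1) || (val x == 2)) s,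
         sumn (map val s) == n
       & water (map val s) == k]].

Definition w (n k : nat) : nat := \sum_(t < n.+1) #|W_set n k t|.

(* Equality of formal power series  sum_n a n q^n = P / Q  in Z[[q]]
   (Q with constant coefficient 1, hence invertible), i.e.
   (sum_n a n q^n) * Q = P coefficientwise; the n-th coefficient of the
   product only involves a 0, ..., a n. *)
Definition gf_eq (a : nat -> int) (P Q : {poly int}) : Prop :=
  forall n : nat, (((\poly_(m < n.+1) a m) * Q)`_n = P`_n)%R.

(* Main.v *)
Require Import Defs.
From mathcomp Require Import all_boot all_order all_algebra.
From mathcomp Require Import zify.
Import GRing.Theory.

Definition smax (c : seq nat) (i : nat) := \max_(i <= j < size c) nth 0 c j.

Lemma smax_consS x s i : smax (x :: s) i.+1 = smax s i.
Proof. by rewrite /smax big_add1. Qed.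

Lemma smax_cons0 x s : smax (x :: s) 0 = maxn x (smax s 0).
Proof.
rewrite /smax big_ltn //= big_add1 /=. by [].
Qed.

Lemma water_cons x s : water (x :: s) =
  \sum_(i < size s) (minn (maxn x (\max_(j < i.+1) nth 0 s j)) (smax s i) - nth 0 s i).
Proof.
rewrite /water /= big_ord_recl /=.
rewrite big_ord_recl big_ord0 maxn0.
rewrite (_ : \max_(0 <= j < (size s).+1) nth 0 (x :: s) j = smax (x::s) 0) // smax_cons0.
rewrite (_ : minn x (maxn x _) = x); last by apply/minn_idPl; apply: leq_maxl.
rewrite subnn add0n; apply: eq_bigr => i _.
rewrite big_ord_recl /=.
by rewrite -[\max_(_.+1 <= j < _) _]/(smax (x::s) i.+1) smax_consS.
Qed.

Definition pmax (s : seq nat) i := \max_(j < i.+1) nth 0 s j.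

Lemma pmax_ge s i : nth 0 s i <= pmax s i.
Proof. exact: (@leq_bigmax _ (fun j : 'I_i.+1 => nth 0 s j) ord_max). Qed.

Lemma water1 s : all (fun x => 0 < x) s -> water (1 :: s) = water s.
Proof.
move=> hs; rewrite water_cons /water; apply: eq_bigr => i _.
rewrite -/(pmax s i) -/(smax s i).
have h1 : 0 < nth 0 s i by apply: (all_nthP 0 hs); apply: ltn_ord.
have h2 := pmax_ge s i.
by rewrite (_ : maxn 1 (pmax s i) = pmax s i) //; apply/maxn_idPr; apply: leq_trans h2.
Qed.

Definition all12 (s : seq nat) := all (fun x => (x == 1) || (x == 2)) s.

Fixpoint obl2 (s : seq nat) : nat :=
  if s is y :: s' then ((y == 1) && (2 \in s')) + obl2 s' else 0.

Lemma smax0_le2 s : all12 s -> smax s 0 <= 2.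
Proof.
elim: s => [|y s IH] /=; first by rewrite /smax big_geq.
case/andP => hy hs; rewrite smax_cons0 geq_max IH // andbT.
by case/orP: hy => /eqP ->.
Qed.

Lemma smax0_2 s : all12 s -> (2 \in s) -> smax s 0 = 2.
Proof.
elim: s => [|y s IH] //=.
case/andP => hy hs; rewrite smax_cons0 in_cons.
case/orP => [/eqP <-|h]; first by apply/maxn_idPl; apply: smax0_le2.
rewrite IH //; apply/maxn_idPr; by case/orP: hy => /eqP ->.
Qed.

Lemma smax0_1 s : all12 s -> (2 \notin s) -> smax s 0 <= 1.
Proof.
elim: s => [|y s IH] //=; first by rewrite /smax big_geq.
case/andP => hy hs; rewrite smax_cons0 in_cons negb_or => /andP [hy2 h].
rewrite geq_max IH // andbT.
by case/orP: hy hy2 => /eqP ->.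
Qed.

Lemma V_obl2 s : all12 s ->
  \sum_(i < size s) (minn 2 (smax s i) - nth 0 s i) = obl2 s.
Proof.
elim: s => [|y s IH] /=; first by rewrite big_ord0.
case/andP => hy hs; rewrite big_ord_recl /= -IH //.
congr (_ + _); last by apply: eq_bigr => i _; rewrite smax_consS.
rewrite smax_cons0.
case/orP: hy => /eqP -> /=.
  case h2: (2 \in s).
    by rewrite smax0_2.
  have := smax0_1 s hs (negbT h2).
  by case: (smax s 0) => [|[|]].
by rewrite (_ : minn 2 (maxn 2 _) = 2) //; apply/minn_idPl; apply: leq_maxl.
Qed.

Lemma water2 s : all12 s -> water (2 :: s) = obl2 s.
Proof.
move=> hs; rewrite water_cons -V_obl2 //; apply: eq_bigr => i _.
rewrite -/(pmax s i); congr (minn _ _ - _).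
apply/maxn_idPl; apply/bigmax_leqP => j _.
case: (ltnP j (size s)) => hj; last by rewrite nth_default.
by have /orP [/eqP ->|/eqP ->] := all_nthP 0 hs j hj.
Qed.

Fixpoint comps (n : nat) : seq (seq nat) :=
  match n with
  | 0 => [:: [::]]
  | S m => match m with
           | 0 => [:: [:: 1]]
           | S p => map (cons 1) (comps m) ++ map (cons 2) (comps p)
           end
  end.

Lemma compsSS n : comps n.+2 = map (cons 1) (comps n.+1) ++ map (cons 2) (comps n).
Proof. by []. Qed.

Lemma nat_ind2 (P : nat -> Prop) : P 0 -> P 1 -> (forall n, P n -> P n.+1 -> P n.+2) ->
  forall n, P n.
Proof.
move=> h0 h1 hS n; suff : P n /\ P n.+1 by case.
by elim: n => [|n [IH1 IH2]]; split => //; apply: hS.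
Qed.

Lemma comps_mem n s : s \in comps n -> all12 s && (sumn s == n).
Proof.
elim/nat_ind2: n s => [s|s|n IH1 IH2 s]; first by rewrite inE => /eqP ->.
  by rewrite inE => /eqP ->.
rewrite compsSS mem_cat => /orP [] /mapP [s' hs' ->].
  have /andP [h1 /eqP h2] := IH2 _ hs'.
  by apply/andP; split; [exact: h1 | rewrite /= h2].
have /andP [h1 /eqP h2] := IH1 _ hs'.
by apply/andP; split; [exact: h1 | rewrite /= h2].
Qed.

Lemma comps_complete s : all12 s -> s \in comps (sumn s).
Proof.
elim: s => [|x s IH] // /andP [hx hs].
case/orP: hx => /eqP ->.
  have -> : sumn (1 :: s) = (sumn s).+1 by [].
  case E: (sumn s) => [|m]; first by move: (IH hs); rewrite E inE => /eqP ->.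
  by rewrite compsSS mem_cat map_f // -E IH.
have -> : sumn (2 :: s) = (sumn s).+2 by [].
by rewrite compsSS mem_cat map_f ?orbT // IH.
Qed.

Lemma comps_memE n s : (s \in comps n) = all12 s && (sumn s == n).
Proof.
apply/idP/idP; first exact: comps_mem.
by case/andP => h /eqP <-; apply: comps_complete.
Qed.

Lemma cons_inj (x : nat) : injective (cons x).
Proof. by move=> a b []. Qed.

Lemma comps_uniq n : uniq (comps n).
Proof.
elim/nat_ind2: n => // n IH1 IH2.
rewrite compsSS cat_uniq !map_inj_uniq ?IH1 ?IH2 //= ?andbT; try exact: cons_inj.
apply/hasP => [[y /mapP [s1 _ ->]]] /mapP [s2 _] //.
Qed.

Lemma count_notin2 n : count (fun s => 2 \notin s) (comps n) = 1.
Proof.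
elim/nat_ind2: n => // n IH1 IH2.
rewrite compsSS count_cat !count_map.
rewrite (eq_count (a2 := fun s => 2 \notin s)); last by move=> s /=; rewrite in_cons.
rewrite IH2 (eq_count (a2 := pred0)) ?count_pred0 //.
Qed.

Lemma all12_pos s : all12 s -> all (fun x => 0 < x) s.
Proof. by elim: s => //= x s IH /andP [/orP [] /eqP -> /IH ->]. Qed.

Lemma obl2_notin s : 2 \notin s -> obl2 s = 0.
Proof.
elim: s => //= y s IH; rewrite in_cons negb_or => /andP [_ h].
by rewrite (negbTE h) andbF IH.
Qed.

Lemma obl2_in s : 0 < obl2 s -> 2 \in s.
Proof.
case h: (2 \in s) => //; by rewrite obl2_notin ?h.
Qed.

Lemma count_uniq_mem (T : eqType) (P : pred T) l1 l2 : uniq l1 -> uniq l2 ->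
  (forall x, P x -> (x \in l1) = (x \in l2)) -> count P l1 = count P l2.
Proof.
move=> u1 u2 h; rewrite -!size_filter; apply: perm_size.
apply: uniq_perm; rewrite ?filter_uniq // => x; rewrite !mem_filter.
by case Px: (P x) => //=; apply: h.
Qed.

Lemma card_W n k t :
  #|W_set n k t| = count (fun s => (water s == k) && (size s == t)) (comps n).
Proof.
rewrite /W_set cardsE cardE /enum_mem size_filter.
set f := fun x : t.-tuple 'I_3 => map val (val x).
pose R := fun s : seq nat => [&& all12 s, sumn s == n, water s == k & size s == t].
transitivity (count R (map f (enum {: t.-tuple 'I_3}))).
  rewrite -enumT count_map; apply: eq_count => x /=.
  by rewrite /R /f size_map size_tuple eqxx andbT /all12 all_map.
transitivity (count R (comps n)).
  apply: count_uniq_mem.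
  - rewrite map_inj_uniq ?enum_uniq // => x y /(inj_map val_inj) h; exact: val_inj.
  - exact: comps_uniq.
  move=> s /and4P [h1 h2 _ /eqP h4]; rewrite comps_memE h1 h2.
  apply/mapP.
  have hl : size (map (@inord 2) s) == t by rewrite size_map h4.
  exists (Tuple hl); first by rewrite mem_enum.
  rewrite /f /= -map_comp map_id_in // => x hx /=.
  rewrite inordK //; move/allP: h1 => /(_ x hx) /orP [] /eqP -> //.
apply: eq_in_count => s; rewrite comps_memE => /andP [h1 h2].
by rewrite /R h1 h2.
Qed.

Lemma sum_eq_ord (m N : nat) : \sum_(t < N) ((m == t :> nat) : nat) = (m < N).
Proof.
elim: N => [|N IH]; first by rewrite big_ord0.
rewrite big_ord_recr /= IH ltnS [in RHS]leq_eqVlt.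
by case: (ltngtP m N).
Qed.

Lemma sum_count_size (P : pred (seq nat)) N l : all (fun s => size s < N) l ->
  \sum_(t < N) count (fun s => P s && (size s == t)) l = count P l.
Proof.
elim: l => [|x l IH] /=; first by rewrite big1.
case/andP => hx hl; rewrite big_split /= IH //; congr (_ + _).
case: (P x) => /=; last by rewrite big1.
by rewrite sum_eq_ord hx.
Qed.

Lemma size_le_sumn s : all (fun x => 0 < x) s -> size s <= sumn s.
Proof. elim: s => //= x s IH /andP [hx /IH]; lia. Qed.

Lemma w_count n k : w n k = count (fun s => water s == k) (comps n).
Proof.
rewrite /w (eq_bigr (fun t : 'I_n.+1 => count (fun s => (water s == k) && (size s == t)) (comps n))).
  apply: sum_count_size; apply/allP => s; rewrite comps_memE => /andP [h1 /eqP h2].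
  by rewrite ltnS -h2 size_le_sumn // all12_pos.
by move=> t _; rewrite card_W.
Qed.

Section Rec.
Variable k : nat.
Hypothesis hk : 0 < k.

Definition F n := count (fun s => water s == k) (comps n).
Definition H n j := count (fun s => (2 \in s) && (obl2 s == j)) (comps n).

Lemma F0 : F 0 = 0.
Proof. rewrite /F /= /water big_ord0; by case: k hk. Qed.

Lemma F1 : F 1 = 0.
Proof. rewrite /F /= water1 // /water big_ord0; by case: k hk. Qed.

Lemma FSS n : F n.+2 = F n.+1 + H n k.
Proof.
rewrite /F compsSS count_cat !count_map; congr (_ + _).
  apply: eq_in_count => s; rewrite comps_memE => /andP [h _] /=.
  by rewrite water1 // all12_pos.
apply: eq_in_count => s; rewrite comps_memE => /andP [h _] /=.
rewrite water2 //.
case E: (obl2 s == k); last by rewrite andbF.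
by rewrite andbT obl2_in // (eqP E).
Qed.

Lemma H0 j : H 0 j = 0. Proof. by []. Qed.
Lemma H1 j : H 1 j = 0. Proof. by []. Qed.

Lemma count_split (T : Type) (a b : pred T) l :
  count a l = count (fun s => a s && b s) l + count (fun s => a s && ~~ b s) l.
Proof. elim: l => //= x l ->; case: (a x); case: (b x) => /=; lia. Qed.

Lemma HSS n j : H n.+2 j = (if j is j'.+1 then H n.+1 j' else 0) + H n j + (j == 0).
Proof.
rewrite /H compsSS count_cat !count_map -addnA; congr (_ + _).
  case: j => [|j].
    by rewrite (eq_count (a2 := pred0)) ?count_pred0 // => s /=; rewrite in_cons /=; case: (2 \in s).
  by apply: eq_count => s /=; rewrite in_cons /=; case: (2 \in s).
rewrite (eq_count (a2 := fun s => obl2 s == j)); last by move=> s /=; rewrite ?in_cons ?eqxx.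
rewrite (count_split _ (fun s => obl2 s == j) (fun s => 2 \in s)); congr (_ + _).
  by apply: eq_count => s; rewrite andbC.
rewrite (eq_in_count (a2 := fun s : seq nat => (j == 0) && (2 \notin s))).
  by case: (j == 0) => /=; [rewrite count_notin2 | rewrite count_pred0].
move=> s _ /=; case h: (2 \in s) => /=; rewrite ?andbF // obl2_notin ?h //.
by rewrite eq_sym.
Qed.
End Rec.

Section Series.
Local Open Scope ring_scope.

Definition mulsp (a : nat -> int) (Q : {poly int}) (n : nat) : int :=
  \sum_(i < n.+1) a i * Q`_(n - i).

Definition pz (a : nat -> int) (N : nat) : {poly int} := \poly_(m < N) a m.

Lemma mulspE a Q n N : (n < N)%N -> mulsp a Q n = (pz a N * Q)`_n.
Proof.
move=> hn; rewrite coefM /mulsp; apply: eq_bigr => i _.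
by rewrite coef_poly (leq_ltn_trans _ hn) // -ltnS.
Qed.

Lemma coefM_ext (p p' Q : {poly int}) n :
  (forall j, (j <= n)%N -> p`_j = p'`_j) -> (p * Q)`_n = (p' * Q)`_n.
Proof.
move=> h; rewrite !coefM; apply: eq_bigr => i _; rewrite h // -ltnS //.
Qed.

Lemma mulsp_ext a b Q n : (forall m, (m <= n)%N -> a m = b m) -> mulsp a Q n = mulsp b Q n.
Proof. move=> h; apply: eq_bigr => i _; rewrite h // -ltnS //. Qed.

Lemma mulsp_assoc a P Q n : mulsp (mulsp a P) Q n = mulsp a (P * Q) n.
Proof.
rewrite (mulspE _ _ _ _ (ltnSn n)) (mulspE a _ _ _ (ltnSn n)) mulrA.
apply: coefM_ext => j hj; rewrite coef_poly ltnS hj; exact: mulspE.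
Qed.

Definition shiftS (m : nat) (a : nat -> int) (n : nat) : int :=
  if (m <= n)%N then a (n - m)%N else 0.

Lemma mulsp_shift m a Q n : mulsp (shiftS m a) Q n = shiftS m (mulsp a Q) n.
Proof.
rewrite (mulspE _ _ _ _ (ltnSn n)).
rewrite (@coefM_ext _ ('X^m * pz a n.+1)); last first.
  move=> j hj; rewrite coefXnM !coef_poly /shiftS ltnS hj leqNgt.
  case: (j < m)%N => //=; rewrite ltnS (leq_trans (leq_subr _ _) hj) //.
rewrite -mulrA coefXnM /shiftS; case: (ltnP n m) => // h.
by rewrite -mulspE // ltnS leq_subr.
Qed.

Lemma mulsp_1mXn a m n : mulsp a (1 - 'X^m) n = a n - shiftS m a n.
Proof.
rewrite (mulspE _ _ _ _ (ltnSn n)) mulrBr mulr1 coefB coef_poly ltnSn.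
rewrite mulrC coefXnM /shiftS; case: (ltnP n m) => // h.
by rewrite coef_poly ltnS leq_subr.
Qed.

Definition delta (n : nat) : int := (n == 0)%:R.

Lemma mulsp_delta Q n : mulsp delta Q n = Q`_n.
Proof.
rewrite /mulsp big_ord_recl big1 ?addr0 /delta /= ?mul1r ?subn0 //.
by move=> i _; rewrite mul0r.
Qed.

Lemma shiftS_shift a b f n : shiftS a (shiftS b f) n = shiftS (a + b) f n.
Proof.
rewrite /shiftS; case: (leqP a n) => h1; case: (leqP b (n - a)) => h2;
  case: (leqP (a + b) n) => h3 //; try (exfalso; lia).
by rewrite subnDA.
Qed.

End Series.

Section Main.
Local Open Scope ring_scope.

Definition ones (n : nat) : int := 1.

Lemma step_F k (hk : (0 < k)%N) n :
  mulsp (fun m => (F k m)%:Z) (1 - 'X) n = shiftS 2 (fun m => (H m k)%:Z) n.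
Proof.
rewrite -['X]expr1 mulsp_1mXn /shiftS.
case: n => [|[|n]] /=; first by rewrite F0.
  by rewrite F1 // F0.
by rewrite FSS // subn1 /= PoszD addrAC subrr add0r subn2.
Qed.

Lemma step_H j n :
  mulsp (fun m => (H m j.+1)%:Z) (1 - 'X^2) n = shiftS 1 (fun m => (H m j)%:Z) n.
Proof.
rewrite mulsp_1mXn /shiftS.
case: n => [|[|n]] /=; first by rewrite H0.
  by rewrite H1 H0.
by rewrite (@HSS 1 isT) /= addn0 subn2 subn1 PoszD addrK.
Qed.

Lemma step_H0 n :
  mulsp (fun m => (H m 0)%:Z) (1 - 'X^2) n = shiftS 2 ones n.
Proof.
rewrite mulsp_1mXn /shiftS.
case: n => [|[|n]] /=; first by rewrite H0.
  by rewrite H1.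
by rewrite (@HSS 1 isT) /= add0n subn2 PoszD addrAC subrr add0r.
Qed.

Lemma step_ones n : mulsp ones (1 - 'X) n = delta n.
Proof.
rewrite -['X]expr1 mulsp_1mXn /shiftS /ones /delta.
by case: n => [|n] //=; rewrite subrr.
Qed.

Lemma H_series j n :
  mulsp (fun m => (H m j)%:Z) ((1 - 'X) * (1 - 'X^2) ^+ j.+1) n = shiftS (j + 2) delta n.
Proof.
elim: j n => [|j IH] n.
  rewrite expr1 mulrC -mulsp_assoc (mulsp_ext _ (shiftS 2 ones)); last first.
    by move=> m _; rewrite step_H0.
  rewrite mulsp_shift /shiftS; case: (2 <= n)%N => //.
  by rewrite step_ones.
rewrite exprS mulrCA -mulsp_assoc (mulsp_ext _ (shiftS 1 (fun m => (H m j)%:Z))); last first.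
  by move=> m _; rewrite step_H.
rewrite mulsp_shift.
rewrite (_ : shiftS 1 _ n = shiftS 1 (shiftS (j + 2) delta) n); last first.
  by rewrite /shiftS; case: (1 <= n)%N => //; rewrite IH.
by rewrite shiftS_shift add1n addSn.
Qed.

End Main.

Local Open Scope ring_scope.

Theorem theorem2p2 (k : nat) : (1 <= k)%N ->
  gf_eq (fun n => (w n k)%:Z) ('X^(k + 4))
        ((1 - 'X) ^+ 2 * (1 - 'X ^+ 2) ^+ k.+1).
Proof.
move=> hk n.
rewrite -(mulspE _ _ _ _ (ltnSn n)).
rewrite (mulsp_ext _ (fun m => (F k m)%:Z)); last by move=> m _; rewrite w_count.
rewrite expr2 -mulrA -mulsp_assoc.
rewrite (mulsp_ext _ (shiftS 2 (fun m => (H m k)%:Z))); last first.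
  by move=> m _; rewrite step_F.
rewrite mulsp_shift.
rewrite (_ : shiftS 2 _ n = shiftS 2 (shiftS (k + 2)%N delta) n); last first.
  by rewrite /shiftS; case: (2 <= n)%N => //; rewrite H_series.
rewrite shiftS_shift coefXn /shiftS /delta.
have -> : (2 + (k + 2))%N = (k + 4)%N by rewrite addnC -addnA.
case: (ltngtP n (k + 4)) => h.
- by [].
- by rewrite subn_eq0 leqNgt h.
- by rewrite h subnn.
Qed.
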